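(* Let $p$ and $m$ be positive integers. The binomial coefficients $\binom{\lambda p+1}{2}$ are divisible by $m$ for all non-negative integers $\lambda$ if and only if either $m$ is odd and $m\mid p$, or $m$ is even and $2m\mid p$. *)

(* Defs.v *)
From mathcomp Require Import all_boot.

(* Main.v *)
Require Import Defs.
From mathcomp Require Import all_boot zify.

Lemma keyC (m n : nat) : (m %| 'C(n + 1, 2)) = (2 * m %| (n + 1) * n).
Proof.
rewrite bin2 addn1 /= -divn2.
have h2 : 2 %| n.+1 * n by rewrite dvdn2 oddM /= andNb.
case/dvdnP: h2 => y ->.
rewrite mulnK // [y * 2]mulnC dvdn_pmul2l //.
Qed.

Theorem proposition13 (p m : nat) (hp : 0 < p) (hm : 0 < m) :
  (forall lambda : nat, m %| 'C(lambda * p + 1, 2)) <->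
  ((odd m && (m %| p)) || (~~ odd m && (2 * m %| p))).
Proof.
split.
- move=> H.
  have H1 := H 1; have H2 := H 2.
  rewrite keyC mul1n in H1; rewrite keyC in H2.
  have E : 2 * p = 4 * ((p + 1) * p) - (2 * p + 1) * (2 * p).
    have E4 : 4 * ((p + 1) * p) = (2 * p + 1) * (2 * p) + 2 * p by nia.
    by rewrite E4 addnC addnK.
  have Hmp : m %| p.
    rewrite -(dvdn_pmul2l (isT : 0 < 2)) E dvdn_sub //.
    by apply: dvdn_mull.
  case: (boolP (odd m)) => om; first by rewrite Hmp.
  rewrite /=.
  case/dvdnP: Hmp => k pk.
  rewrite pk in H1 *.
  rewrite dvdn_pmul2r // dvdn2.
  rewrite mulnA dvdn_pmul2r // dvdn2 oddM oddD oddM (negbTE om) /= andbF /= in H1.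
  by [].
- case/orP => /andP [om hd] lambda; rewrite keyC.
  + have c : coprime 2 m by rewrite coprime2n.
    rewrite Gauss_dvd //; apply/andP; split.
      by rewrite dvdn2 oddM addn1 /= andNb.
    by apply: dvdn_mull; apply: dvdn_mull.
  + by apply: dvdn_mull; apply: dvdn_mull.
Qed.
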